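(* Let $G$ be an AT-free graph. Then $\operatorname{tw}(G)\le 3\Delta(G)-2$, where $\Delta(G)$ is the maximum degree of $G$.
   Context: An asteroidal triple in $G$ is an independent set of three vertices such that each pair is joined by a path avoiding the (closed) neighborhood of the third; $G$ is AT-free if it has no asteroidal triple. The treewidth $\operatorname{tw}(G)$ is the minimum, over all tree decompositions $(\{X_i\},T)$ of $G$ (a tree $T$ with vertex subsets $X_i$ at its nodes covering all vertices and all edges, such that for each vertex the nodes containing it form a connected subtree), of $\max_i|X_i|-1$. *)

(* Defs.v *)
From mathcomp Require Import all_boot.
Set Implicit Arguments. Unset Strict Implicit. Unset Printing Implicit Defensive.

Section Graphs.
Variable V : finType.

Definition simple_graph (e : rel V) : Prop := symmetric e /\ irreflexive e.

Definition closed_nbhd (e : rel V) (z : V) : {set V} := [set w | (w == z) || e z w].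

Definition path_avoiding (e : rel V) (S : {set V}) (x y : V) : Prop :=
  x \notin S /\ y \notin S /\
  connect [rel a b | [&& e a b, a \notin S & b \notin S]] x y.

Definition independent3 (e : rel V) (x y z : V) : Prop :=
  [/\ x != y, y != z, x != z & [/\ ~~ e x y, ~~ e y z & ~~ e x z]].

Definition asteroidal_triple (e : rel V) (x y z : V) : Prop :=
  [/\ independent3 e x y z,
      path_avoiding e (closed_nbhd e z) x y,
      path_avoiding e (closed_nbhd e x) y z &
      path_avoiding e (closed_nbhd e y) x z].

Definition AT_free (e : rel V) : Prop :=
  forall x y z, ~ asteroidal_triple e x y z.

Definition max_degree (e : rel V) : nat := \max_(v : V) #|[set w | e v w]|.

End Graphs.

Section Trees.
Variable I : finType.

Definition has_cycle (t : rel I) : Prop :=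
  exists c : seq I, [/\ 2 < size c, uniq c & cycle t c].

Definition is_tree (t : rel I) : Prop :=
  [/\ simple_graph t, 0 < #|I|, (forall i j, connect t i j) & ~ has_cycle t].
End Trees.

Definition tree_decomposition (V I : finType) (e : rel V) (t : rel I)
    (B : I -> {set V}) : Prop :=
  [/\ is_tree t,
      (forall v : V, exists i, v \in B i),
      (forall u v : V, e u v -> exists i, (u \in B i) && (v \in B i)) &
      (forall (v : V) (i j : I), v \in B i -> v \in B j ->
         connect [rel a b | [&& t a b, v \in B a & v \in B b]] i j)].

Definition td_width (V I : finType) (B : I -> {set V}) : nat :=
  (\max_(i : I) #|B i|) - 1.

Definition treewidth_le (V : finType) (e : rel V) (k : nat) : Prop :=
  exists (I : finType) (t : rel I) (B : I -> {set V}),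
    tree_decomposition e t B /\ td_width B <= k.

(* Main.v *)
Require Import Defs.
From mathcomp Require Import all_boot zify.
Set Implicit Arguments. Unset Strict Implicit. Unset Printing Implicit Defensive.

Section Basic.
Variable V : finType.
Variable e : rel V.
Hypothesis esym : symmetric e.
Hypothesis eirr : irreflexive e.

Local Notation N := (closed_nbhd e).

Lemma inN u v : (u \in N v) = (u == v) || e v u.
Proof. by rewrite /closed_nbhd inE. Qed.

Lemma inN_sym u v : (u \in N v) = (v \in N u).
Proof. by rewrite !inN eq_sym esym. Qed.

Lemma inN_self v : v \in N v.
Proof. by rewrite inN eqxx. Qed.

Definition near (a b : V) (L : nat) :=
  exists2 q, path e a q & (last a q = b /\ size q <= L).

Lemma near_refl a : near a a 0.
Proof. by exists [::]. Qed.

Lemma near_N a b : b \in N a -> near a b 1.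
Proof.
rewrite inN => /orP [/eqP -> | Hab]; first by exists [::].
by exists [:: b]; rewrite /= ?Hab.
Qed.

Lemma near_trans a b c L1 L2 : near a b L1 -> near b c L2 -> near a c (L1 + L2).
Proof.
move=> [q1 P1 [E1 S1]] [q2 P2 [E2 S2]]; exists (q1 ++ q2).
  by rewrite cat_path P1 E1 P2.
by rewrite last_cat E1 E2 size_cat; split => //; lia.
Qed.

Lemma near_mono a b L L' : L <= L' -> near a b L -> near a b L'.
Proof. move=> H [q P [E S]]; exists q => //; split => //; lia. Qed.

Lemma last_take (x : V) (p : seq V) i : i <= size p -> last x (take i p) = nth x (x :: p) i.
Proof.
elim: p x i => [|y p IH] x i; first by case: i.
case: i => [|i] Hi /=. by [].
by rewrite IH // (set_nth_default y).
Qed.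

Section Shortest.
Variables (x : V) (p : seq V).
Hypothesis Hp : path e x p.
Hypothesis Hmin : forall q, path e x q -> last x q = last x p -> size p <= size q.

Lemma SP i j L : i <= size p -> j <= size p ->
  near (nth x (x :: p) i) (nth x (x :: p) j) L -> j <= i + L.
Proof.
move=> Hi Hj [q Pq [Eq Sq]].
have Hpre : path e x (take i p) by apply: take_path.
have Hsuf : path e (nth x (x :: p) j) (drop j p).
  have := Hp; rewrite -{1}(cat_take_drop j p) cat_path => /andP [_ H].
  by rewrite -last_take.
have := Hmin (q := take i p ++ q ++ drop j p).
rewrite !cat_path Hpre last_take // Pq Eq Hsuf => /(_ isT).
rewrite !last_cat last_take // Eq.
have -> : last (nth x (x :: p) j) (drop j p) = last x p.
  by rewrite -last_take // -last_cat cat_take_drop.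
move=> /(_ erefl); rewrite !size_cat size_take size_drop.
case: ltnP => H; lia.
Qed.

End Shortest.

Definition RS (S : {set V}) := [rel a b | [&& e a b, a \notin S & b \notin S]].
Definition pab (S : {set V}) a b := [&& a \notin S, b \notin S & connect (RS S) a b].

Lemma pabP S a b : reflect (path_avoiding e S a b) (pab S a b).
Proof.
rewrite /pab /path_avoiding; apply: (iffP and3P) => [[-> -> H]|[-> [-> H]]] //.
Qed.

Lemma RS_sym S : symmetric (RS S).
Proof. by move=> a b /=; rewrite esym; case: (e b a); case: (a \in S); case: (b \in S). Qed.

Lemma pab_sym S a b : pab S a b -> pab S b a.
Proof.
case/and3P => Ha Hb H; rewrite /pab Ha Hb /=.
by rewrite (sym_connect_sym (RS_sym S)).
Qed.

Lemma pab_trans S a b c : pab S a b -> pab S b c -> pab S a c.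
Proof.
case/and3P => Ha Hb H1 /and3P [_ Hc H2]; rewrite /pab Ha Hc /=.
exact: connect_trans H1 H2.
Qed.

Lemma pab_refl (S : {set V}) a : a \notin S -> pab S a a.
Proof. by move=> Ha; rewrite /pab Ha connect0. Qed.

Lemma pab_N (S : {set V}) a b : a \notin S -> b \notin S -> b \in N a -> pab S a b.
Proof.
move=> Ha Hb; rewrite inN => /orP [/eqP ->|Hab]; first exact: pab_refl.
by rewrite /pab Ha Hb connect1 //= Hab Ha Hb.
Qed.

Lemma pab_connect S a b : pab S a b -> connect e a b.
Proof.
case/and3P => _ _; apply: connect_sub => u v /= /andP [H _].
exact: connect1.
Qed.

Lemma connect_mono_on (R1 R2 : rel V) (P : V -> Prop) a b :
  P a -> (forall u v, P u -> R1 u v -> P v /\ R2 u v) ->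
  connect R1 a b -> connect R2 a b.
Proof.
move=> Pa H /connectP [q Hq ->].
elim: q a Pa Hq => [|c q IH] a Pa /=; first by rewrite connect0.
case/andP => R1ac Hq; have [Pc R2ac] := H a c Pa R1ac.
exact: connect_trans (connect1 R2ac) (IH c Pc Hq).
Qed.

Lemma pab_transfer x y v w :
  pab (N x) y v -> ~~ pab (N x) y w -> w \notin N x -> pab (N w) y v.
Proof.
move=> Hyv Hyw Hw.
have Hout : forall u, pab (N x) y u -> u \notin N w.
  move=> u Hu; apply/negP; rewrite inN => /orP [/eqP Euw|Ewu].
    by move: Hyw; rewrite -Euw Hu.
  move/negP: Hyw; apply; apply: (pab_trans Hu); apply: pab_N => //.
    by case/and3P: Hu.
  by rewrite inN esym Ewu orbT.
have Hy : y \notin N w by apply: Hout; apply: pab_refl; case/and3P: Hyv.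
rewrite /pab Hy (Hout _ Hyv) /=.
case/and3P: Hyv => Hy' Hv'.
apply: (connect_mono_on (P := fun u => pab (N x) y u)); first exact: pab_refl.
move=> a b Pa /= /and3P [Eab Ha Hb].
have Pb : pab (N x) y b.
  apply: (pab_trans Pa); apply: pab_N => //; by rewrite inN Eab orbT.
by split => //; rewrite Eab (Hout _ Pa) (Hout _ Pb).
Qed.

Lemma path_RS (S : {set V}) x p : path e x p -> all (fun u => u \notin S) (x :: p) -> path (RS S) x p.
Proof.
elim: p x => [|y p IH] x //= /andP [Exy Hp] /and3P [Hx Hy Hall].
by rewrite Exy Hx Hy /= IH //= Hy.
Qed.


Lemma notN a b : b \notin N a -> (b != a) && ~~ e a b.
Proof. by rewrite inN negb_or. Qed.


Local Notation D := (max_degree e).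

Lemma cardN v : #|N v| <= D.+1.
Proof.
have -> : N v = v |: [set w | e v w].
  by apply/setP => u; rewrite inN !inE.
rewrite cardsU1 -add1n; apply: leq_add; first by case: (_ \notin _).
rewrite /max_degree. apply: leq_bigmax.
Qed.

Lemma card_pair (A : {set V}) a b : a != b -> a \in A -> b \in A -> 2 <= #|A|.
Proof.
move=> Hab Ha Hb; apply: (@leq_trans #|[set a; b]|); first by rewrite cards2 Hab.
by apply: subset_leq_card; apply/subsetP => u; rewrite !inE => /orP [] /eqP ->.
Qed.

Lemma card_NN a b : e a b -> #|N a :|: N b| <= D.+1 + D.+1 - 2.
Proof.
move=> Eab; rewrite cardsU.
have Hab : a != b by apply/negP => /eqP Eq; move: Eab; rewrite Eq eirr.
have H2 : 2 <= #|N a :&: N b|.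
  apply: (card_pair Hab); rewrite inE ?inN_self inN ?Eab ?orbT //.
  by rewrite esym Eab orbT.
have := cardN a; have := cardN b; lia.
Qed.

Lemma card_NNN a b c : e a b -> e b c -> #|N a :|: N b :|: N c| <= 3 * D - 1.
Proof.
move=> Eab Ebc; rewrite cardsU.
have Hbc : b != c by apply/negP => /eqP Eq; move: Ebc; rewrite Eq eirr.
have H2 : 2 <= #|(N a :|: N b) :&: N c|.
  apply: (card_pair Hbc); rewrite !inE ?eqxx ?Ebc /= ?orbT /=; [by rewrite esym Ebc orbT | by []].

have := card_NN Eab; have := cardN c. lia.
Qed.

Section DP.
Hypothesis atf : AT_free e.

Lemma noAT a b c : b \notin N a -> c \notin N a -> c \notin N b ->
  pab (N c) a b -> pab (N a) b c -> pab (N b) a c -> False.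
Proof.
move=> /notN/andP [Hba Eab] /notN/andP [Hca Eac] /notN/andP [Hcb Ebc] H1 H2 H3.
apply: (atf (x := a) (y := b) (z := c)); split.
- by split; rewrite 1?eq_sym.
- exact/pabP.
- exact/pabP.
- exact/pabP.
Qed.

Lemma dom_path (r : V) : exists x p,
  [/\ connect e r x, path e x p,
      (forall q, path e x q -> last x q = last x p -> size p <= size q) &
      (forall w, connect e r w -> has (fun u => u \in N w) (x :: p))].
Proof.
have csym := sym_connect_sym esym.
pose P := fun ab : V * V => [&& connect e r ab.1, connect e r ab.2 & ab.2 \notin N ab.1].
case: (pickP P) => [ab0 Hab0 | Hclique]; last first.
  exists r, [::]; split; [exact: connect0 | by [] | by [] | ].
  move=> w Kw /=; rewrite orbF inN_sym.
  by move: (Hclique (r, w)); rewrite /P /= connect0 Kw /= => /negbFE.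
pose f := fun ab : V * V => #|[set v | pab (N ab.1) ab.2 v]|.
case: (arg_maxnP f Hab0) => [[x y0]] /and3P [/= Kx Ky0 Hy0x] Hmax.
have Hy0C : y0 \in [set v | pab (N x) y0 v] by rewrite inE pab_refl.
pose g := fun y => #|[set v | pab (N y) x v]|.
case: (arg_maxnP g Hy0C) => y HyC Hmaxy.
have : y \in [set v | pab (N x) y0 v] := HyC. rewrite inE => Hy0y.
have Hyx : y \notin N x by case/and3P: Hy0y.
have Ky : connect e r y by apply: connect_trans Ky0 (pab_connect Hy0y).
have Hxx : x \in N x := inN_self x.
have DP : forall w, connect e r w -> w \notin N x -> w \notin N y -> ~~ pab (N w) x y.
  move=> w Kw Hwx Hwy; apply/negP => Hxy.
  case Hyw: (pab (N x) y w).
  - have HwC : w \in [set v | pab (N x) y0 v] by rewrite inE (pab_trans Hy0y Hyw).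
    have Hxw : ~~ pab (N y) x w.
      apply/negP => Hxw; exact: (noAT Hyx Hwx Hwy Hxy Hyw Hxw).
    have Hpr : [set v | pab (N y) x v] \proper [set v | pab (N w) x v].
      apply/properP; split.
        by apply/subsetP => v; rewrite !inE => Hv; apply: (pab_transfer Hv Hxw Hwy).
      exists y; rewrite !inE //.
      by apply/negP => /and3P [_ /negP []]; apply: inN_self.
    have : g w <= g y := Hmaxy w HwC. rewrite leqNgt => /negP; apply.
    exact: proper_card.
  - have Hpr : [set v | pab (N x) y0 v] \proper [set v | pab (N w) x v].
      apply/properP; split.
        apply/subsetP => v; rewrite !inE => Hv.
        apply: (pab_trans Hxy); apply: pab_transfer (negbT Hyw) Hwx.
        exact: pab_trans (pab_sym Hy0y) Hv.
      exists x; rewrite !inE; first by apply: pab_refl; case/and3P: Hxy.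
      by rewrite /pab inN_self /= andbF.
    have HP : P (w, x) by rewrite /P /= Kw Kx /=; case/and3P: Hxy.
    have : f (w, x) <= f (x, y0) := Hmax (w, x) HP. rewrite leqNgt => /negP; apply.
    exact: proper_card.
have Cxy : connect e x y by apply: connect_trans Ky; rewrite csym.
pose Q := fun n => [exists t : n.-tuple V, path e x t && (last x t == y)].
have exQ : exists n, Q n.
  case/connectP: Cxy => q Hq Hl; exists (size q); apply/existsP.
  by exists (in_tuple q); rewrite /= Hq Hl eqxx.
case: (ex_minnP exQ) => n /existsP [t /andP [Ht /eqP Hlt]] Hminn.
exists x, (tval t); split => //.
  move=> q Hq Hl; rewrite size_tuple; apply: Hminn; apply/existsP.
  by exists (in_tuple q); rewrite /= Hq Hl Hlt eqxx.
move=> w Kw.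
case Hwx: (w \in N x); first by rewrite /= inN_sym Hwx.
case Hwy: (w \in N y).
  rewrite -[_ || _]/(has _ (x :: tval t)); apply/hasP; exists y; last by have H : y \in N w by rewrite inN_sym Hwy. 
  by rewrite -Hlt mem_last.
apply/negPn/negP => Hn.
have := DP w Kw (negbT Hwx) (negbT Hwy); rewrite /pab -Hlt.
have Hall : all (fun u => u \notin N w) (x :: t).
  apply/allP => u; rewrite inE => /orP [/eqP -> | Hu]; first by rewrite inN_sym Hwx.
  apply/negP => Hu'; move/negP: Hn; apply; apply/orP; right; apply/hasP; exists u => //; by rewrite inN_sym.
move/allP: (Hall) => Hall'.
rewrite Hall' ?mem_head // Hall' ?mem_last //=.
by apply/negP/negPn/connectP; exists t => //; apply: path_RS.
Qed.


Section Bags.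
Variables (x : V) (p : seq V).
Hypothesis Hp : path e x p.
Hypothesis Hmin : forall q, path e x q -> last x q = last x p -> size p <= size q.

Local Notation sj j := (nth x (x :: p) j).

Definition Nsel j := if j <= size p then N (sj j) else set0.
Definition bag i := Nsel i :|: Nsel i.+1 :|: Nsel i.+2.

Lemma bag_in v i j : i <= j <= i.+2 -> j <= size p -> v \in N (sj j) -> v \in bag i.
Proof.
move=> /andP [H1 H2] Hj Hv.
have Hs : v \in Nsel j by rewrite /Nsel Hj.
rewrite /bag !inE.
have [Ej|Hne] := eqVneq j i; first by rewrite -Ej Hs.
have [Ej|Hne1] := eqVneq j i.+1; first by rewrite -Ej Hs orbT.
have Ej : j = i.+2 by lia.
by rewrite -Ej Hs orbT.
Qed.

Lemma bag_out v i : v \in bag i -> exists j, [/\ i <= j <= i.+2, j <= size p & v \in N (sj j)].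
Proof.
rewrite /bag !inE /Nsel => /orP [/orP [] | ] H;
  [exists i | exists i.+1 | exists i.+2]; move: H; case: ifP => Hj; rewrite ?inE // => Hv; split => //; lia.
Qed.

Lemma SPv v i j : i <= size p -> j <= size p -> v \in N (sj i) -> v \in N (sj j) -> j <= i + 2.
Proof.
move=> Hi Hj Hvi Hvj; apply: (SP Hp Hmin Hi Hj).
apply: (near_trans (near_N Hvi)); apply: near_N; by rewrite inN_sym.
Qed.

Lemma bag_interval v a b c : a <= b <= c -> v \in bag a -> v \in bag c -> v \in bag b.
Proof.
move=> /andP [Hab Hbc] /bag_out [j1 [/andP [H1 H1'] Hj1 Hv1]] /bag_out [j2 [/andP [H2 H2'] Hj2 Hv2]].
case: (leqP b j1) => Hb.
  by apply: (bag_in (j := j1)) => //; apply/andP; split; lia.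
have := SPv Hj1 Hj2 Hv1 Hv2 => Hd.
by apply: (bag_in (j := j2)) => //; apply/andP; split; lia.
Qed.

Lemma bag_card i : 0 < D -> i <= size p -> #|bag i| <= 3 * D - 1.
Proof.
move=> HD Hi.
have Ee : forall j, j < size p -> e (sj j) (sj j.+1).
  by move=> j Hj; move/(pathP x): Hp => /(_ j Hj).
rewrite /bag /Nsel Hi.
case: (leqP i.+2 (size p)) => H2.
  have H1 : i.+1 <= size p by lia.
  rewrite H1; apply: card_NNN; apply: Ee; lia.
rewrite setU0.
case: (leqP i.+1 (size p)) => H1.
  apply: leq_trans (card_NN (Ee i H1)) _; lia.
rewrite setU0.
apply: leq_trans (cardN _) _; lia.
Qed.


Lemma close u v i j : i <= size p -> j <= size p -> i <= j <= i.+2 ->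
  u \in N (sj i) -> v \in N (sj j) ->
  exists m, [/\ m <= size p, u \in bag m & v \in bag m].
Proof.
move=> Hi Hj Hij Hu Hv; exists i; split => //.
  by apply: (bag_in (j := i)) => //; rewrite leqnn /=; lia.
exact: (bag_in (j := j)).
Qed.

Lemma farN a b : a <= size p -> b <= size p -> a.+1 < b -> sj b \notin N (sj a).
Proof.
move=> Ha Hb Hab; apply/negP => H.
have := SP Hp Hmin Ha Hb (near_N H); lia.
Qed.

Lemma edge3 u v i : e u v -> i + 3 <= size p -> u \in N (sj i) -> v \in N (sj (i + 3)) ->
  exists m, [/\ m <= size p, u \in bag m & v \in bag m].
Proof.
move=> Euv Hi Hu Hv.
have Hi0 : i <= size p by lia.
have Hi1 : i.+1 <= size p by lia.
have Hi2 : i.+2 <= size p by lia.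
case Hv0: (v \in N (sj i)); first by apply: (close Hi0 Hi0) => //; lia.
case Hv1: (v \in N (sj i.+1)); first by apply: (close Hi0 Hi1) => //; lia.
case Hv2: (v \in N (sj i.+2)); first by apply: (close Hi0 Hi2) => //; lia.
case Hu1: (u \in N (sj i.+1)); first by apply: (close (j := i + 3) Hi1) => //; lia.
case Hu2: (u \in N (sj i.+2)); first by apply: (close (j := i + 3) Hi2) => //; lia.
exfalso.
have Ee : forall j, j < size p -> e (sj j) (sj j.+1).
  by move=> j Hj; move/(pathP x): Hp => /(_ j Hj).
have N20 : sj i.+2 \notin N (sj i) by apply: farN => //; lia.
have N30 : sj (i + 3) \notin N (sj i) by apply: farN => //; lia.
have N02 : sj i \notin N (sj i.+2) by rewrite inN_sym.
have A0 : sj i \notin N v by rewrite inN_sym Hv0.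
have A1 : sj i.+1 \notin N v by rewrite inN_sym Hv1.
have A2 : sj i.+2 \notin N v by rewrite inN_sym Hv2.
have B0 : v \notin N (sj i) by rewrite Hv0.
have B2 : v \notin N (sj i.+2) by rewrite Hv2.
have U2 : u \notin N (sj i.+2) by rewrite Hu2.
have E01 : sj i.+1 \in N (sj i) by rewrite inN Ee ?orbT //; lia.
have E12 : sj i.+2 \in N (sj i.+1) by rewrite inN Ee ?orbT //; lia.
have E23 : sj (i + 3) \in N (sj i.+2).
  have H3 : i + 3 = i.+3 by rewrite addn3.
  have H4 : i.+2 < size p by move: Hi; rewrite addn3.
  rewrite H3 inN; apply/orP; right; exact: Ee.
have Evu : v \in N u by rewrite inN Euv orbT.
apply: (noAT (a := sj i) (b := sj i.+2) (c := v)) => //.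
- exact: (pab_trans (pab_N A0 A1 E01) (pab_N A1 A2 E12)).
- exact: (pab_trans (pab_N N20 N30 E23) (pab_N N30 B0 Hv)).
- have U0 : u \notin N (sj i.+2) := U2.
  exact: (pab_trans (pab_N N02 U2 Hu) (pab_N U2 B2 Evu)).
Qed.

Lemma edge_bag u v i j : e u v -> i <= size p -> j <= size p ->
  u \in N (sj i) -> v \in N (sj j) ->
  exists m, [/\ m <= size p, u \in bag m & v \in bag m].
Proof.
move=> Euv Hi Hj Hu Hv.
have Huv : v \in N u by rewrite inN Euv orbT.
have Hvu : u \in N v by rewrite inN esym Euv orbT.
have Hvs : sj j \in N v by rewrite inN_sym.
have Hus : sj i \in N u by rewrite inN_sym.
have Hn1 : j <= i + 3.
  have := SP Hp Hmin Hi Hj (near_trans (near_trans (near_N Hu) (near_N Huv)) (near_N Hvs)); lia.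
have Hn2 : i <= j + 3.
  have := SP Hp Hmin Hj Hi (near_trans (near_trans (near_N Hv) (near_N Hvu)) (near_N Hus)); lia.
case: (leqP i j) => Hij.
  case: (leqP j i.+2) => Hj2; first by apply: (close Hi Hj) => //; rewrite Hij.
  have Ej : j = i + 3 by lia.
  by subst j; apply: (edge3 (i := i) Euv).
case: (leqP i j.+2) => Hi2.
  have [m [Hm Hum Hvm]] : exists m, [/\ m <= size p, v \in bag m & u \in bag m].
    by apply: (close Hj Hi) => //; lia.
  by exists m.
have Ei : i = j + 3 by lia.
have [m [Hm Hum Hvm]] : exists m, [/\ m <= size p, v \in bag m & u \in bag m].
  by subst i; apply: (edge3 (i := j)); rewrite // esym.
by exists m.
Qed.
End Bags.


Definition pd (U : {set V}) (bs : seq {set V}) :=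
  [/\ (forall i v, v \in nth set0 bs i -> v \in U),
      (forall v, v \in U -> exists2 i, i < size bs & v \in nth set0 bs i),
      (forall u v, u \in U -> e u v ->
         exists2 i, i < size bs & (u \in nth set0 bs i) && (v \in nth set0 bs i)),
      (forall v a b c, a <= b <= c -> v \in nth set0 bs a -> v \in nth set0 bs c ->
         v \in nth set0 bs b) &
      (forall i, #|nth set0 bs i| <= 3 * D - 1)].

Lemma pd_cat (U1 U2 : {set V}) (bs1 bs2 : seq {set V}) : (forall v, v \in U1 -> v \notin U2) ->
  pd U1 bs1 -> pd U2 bs2 -> pd (U1 :|: U2) (bs1 ++ bs2).
Proof.
move=> Hdis [S1 C1 E1 I1 K1] [S2 C2 E2 I2 K2]; split.
- move=> i v; rewrite nth_cat !inE; case: ifP => _ H.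
    by rewrite (S1 _ _ H).
  by rewrite (S2 _ _ H) orbT.
- move=> v; rewrite inE => /orP [Hv|Hv].
    have [i Hi Hvi] := C1 v Hv; exists i; first by rewrite size_cat; lia.
    by rewrite nth_cat Hi.
  have [i Hi Hvi] := C2 v Hv; exists (size bs1 + i); first by rewrite size_cat; lia.
  by rewrite nth_cat ltnNge leq_addr /= addKn.
- move=> u v; rewrite inE => /orP [Hu|Hu] Euv.
    have [i Hi Hvi] := E1 u v Hu Euv; exists i; first by rewrite size_cat; lia.
    by rewrite nth_cat Hi.
  have [i Hi Hvi] := E2 u v Hu Euv; exists (size bs1 + i); first by rewrite size_cat; lia.
  by rewrite nth_cat ltnNge leq_addr /= addKn.
- move=> v a b c Habc; rewrite !nth_cat.
  case: (ltnP a (size bs1)) => Ha; case: (ltnP c (size bs1)) => Hc.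
  + have -> : b < size bs1 by lia.
    exact: I1.
  + move=> /S1 H1 /S2 H2; by move: (Hdis v H1); rewrite H2.
  + lia.
  + have -> : (b < size bs1) = false by lia.
    apply: I2; lia.
- by move=> i; rewrite nth_cat; case: ifP.
Qed.

Lemma pd_nil : pd set0 [::].
Proof.
split.
- by move=> i v /=; rewrite ?nth_nil inE.
- by move=> v; rewrite inE.
- by move=> u v; rewrite inE.
- by move=> v a b c _ /=; rewrite ?nth_nil inE.
- by move=> i /=; rewrite ?nth_nil cards0.
Qed.

Lemma pd_comp (r : V) : 0 < D -> exists bs, pd [set v | connect e r v] bs.
Proof.
move=> HD; have [x [p [Kx Hp Hmin Hdom]]] := dom_path r.
exists (mkseq (bag x p) (size p).+1); split.
- move=> i v; case: (ltnP i (size p).+1) => Hi; last by rewrite nth_default ?size_mkseq // in_set0.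
  rewrite nth_mkseq // => /(bag_out Hp) [j [_ Hj Hv]]; rewrite inE.
  have Hjs : j < size (x :: p) by [].
  have Hs : connect e x (nth x (x :: p) j) := path_connect Hp (mem_nth x Hjs).
  apply: connect_trans Kx (connect_trans Hs _).
  move: Hv; rewrite inN => /orP [/eqP -> | H]; [exact: connect0 | exact: connect1].
- move=> v; rewrite inE => Kv; have := Hdom v Kv => /(has_nthP x) [j Hj Hjv].
  exists j; first by rewrite size_mkseq.
  rewrite nth_mkseq //; apply: (bag_in Hp (j := j)); [by apply/andP; split; lia | by [] | by rewrite inN_sym].
- move=> u v; rewrite inE => Ku Euv.
  have Kv : connect e r v := connect_trans Ku (connect1 Euv).
  have /(has_nthP x) [i Hi Hiu] := Hdom u Ku.
  have /(has_nthP x) [j Hj Hjv] := Hdom v Kv.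
  have [m [Hm Hum Hvm]] : exists m, [/\ m <= size p, u \in bag x p m & v \in bag x p m].
    apply: (edge_bag Hp Hmin Euv (i := i) (j := j)) => //; by rewrite inN_sym.
  by exists m; rewrite ?size_mkseq ?nth_mkseq // ?Hum ?Hvm.
- move=> v a b c Habc Ha Hcv.
  have Hc : c < (size p).+1.
    by rewrite ltnNge; apply/negP => H; move: Hcv; rewrite nth_default ?size_mkseq // in_set0.
  have Hb : b < (size p).+1 by move/andP: Habc => [_ Hbc]; apply: leq_ltn_trans Hbc Hc.
  have Ha' : a < (size p).+1 by move/andP: Habc => [Hab _]; apply: leq_ltn_trans Hab Hb.
  rewrite (nth_mkseq _ _ Ha') in Ha; rewrite (nth_mkseq _ _ Hc) in Hcv; rewrite (nth_mkseq _ _ Hb).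
  exact: (bag_interval Hp Hmin Habc).
- move=> i; case: (ltnP i (size p).+1) => Hi.
    by rewrite nth_mkseq //; apply: (bag_card Hp).
  by rewrite nth_default ?size_mkseq // cards0.
Qed.



Lemma pd_all n : 0 < D -> forall U : {set V}, #|U| <= n ->
  (forall u v, u \in U -> connect e u v -> v \in U) -> exists bs, pd U bs.
Proof.
move=> HD; have csym := sym_connect_sym esym.
elim: n => [|n IH] U HU Hcl; case: (set_0Vmem U) => [->|[r Hr]];
  try by exists [::]; exact: pd_nil.
  have : 0 < #|U| by apply/card_gt0P; exists r.
  lia.
have [bsK HK] := pd_comp r HD.
pose U' := U :\: [set v | connect e r v].
have [bs' H'] : exists bs, pd U' bs.
  apply: IH.
    have Hpr : U' \proper U.
      apply/properP; split; first by apply/subsetP => v; rewrite !inE => /andP [].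
      by exists r => //; rewrite !inE connect0.
    have := proper_card Hpr; lia.
  move=> u v; rewrite !inE => /andP [Hru Hu] Huv; rewrite (Hcl u v Hu Huv) andbT.
  apply/negP => Hrv; move/negP: Hru; apply.
  by apply: connect_trans Hrv _; rewrite csym.
exists (bsK ++ bs').
have Hdis : forall v, v \in [set v | connect e r v] -> v \notin U'.
  by move=> v; rewrite !inE => ->.
have := pd_cat Hdis HK H'.
have -> : [set v | connect e r v] :|: U' = U.
  apply/setP => v; rewrite !inE.
  case Hrv: (connect e r v) => //=.
  by rewrite (Hcl r v Hr Hrv).
by [].
Qed.
End DP.
End Basic.

Section PathTree.
Variable n : nat.

Definition tp : rel 'I_n := fun i j => (i.+1 == j :> nat) || (j.+1 == i :> nat).

Lemma tp_sym : symmetric tp.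
Proof. by move=> i j; rewrite /tp orbC. Qed.

Lemma conn_interval (P : pred 'I_n) k (i j : 'I_n) : (j : nat) = i + k ->
  (forall m : 'I_n, i <= m <= j -> P m) ->
  connect [rel a b | [&& tp a b, P a & P b]] i j.
Proof.
elim: k j => [|k IH] j Hj HP.
  by have -> : j = i by apply: val_inj => /=; rewrite Hj addn0.
have Hk : i + k < n by have := ltn_ord j; lia.
pose j' := Ordinal Hk.
apply: (connect_trans (IH j' erefl _)).
  move=> m /andP [H1 H2]; apply: HP; apply/andP; split => //; rewrite /= in H2; lia.
apply: connect1 => /=; rewrite /tp /= Hj addnS eqxx /=.
by rewrite !HP //; apply/andP; split => /=; lia.
Qed.

Lemma tp_conn (P : pred 'I_n) (i j : 'I_n) :
  (forall m : 'I_n, minn i j <= m <= maxn i j -> P m) ->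
  connect [rel a b | [&& tp a b, P a & P b]] i j.
Proof.
have Hs : connect_sym [rel a b | [&& tp a b, P a & P b]].
  apply: sym_connect_sym => a b /=; rewrite tp_sym.
  by case: (tp b a); case: (P a); case: (P b).
wlog Hij : i j / i <= j.
  move=> H HP; case: (leqP i j) => Hij; first exact: H.
  rewrite Hs; apply: H; first lia.
  by move=> m Hm; apply: HP; rewrite minnC maxnC.
move=> HP; apply: (conn_interval (k := j - i)); first lia.
move=> m Hm; apply: HP; rewrite (minn_idPl Hij) (maxn_idPr Hij) //.
Qed.

Lemma tp_acyclic : ~ has_cycle tp.
Proof.
move=> [c [Hsz Hu Hc]].
case: c Hsz Hu Hc => [//|c0 c'] Hsz Hu Hc.
case: (@arg_maxnP _ c0 (fun i => i \in c0 :: c') (fun i : 'I_n => (i : nat)) (mem_head _ _)) => m Hm Hmax.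
case/splitPr: Hm Hsz Hu Hc Hmax => s1 s2 Hsz Hu Hc Hmax.
have := Hc; rewrite -(rot_cycle (size s1)) rot_size_cat.
have := Hu; rewrite -(rot_uniq (size s1)) rot_size_cat.
have Hsz' : 1 < size (s2 ++ s1) by move: Hsz; rewrite !size_cat /=; lia.
have Hmem : forall y, y \in s2 ++ s1 -> (y : nat) <= (m : nat).
  move=> y Hy; have : y \in s1 ++ m :: s2.
    by rewrite mem_cat inE; move: Hy; rewrite mem_cat => /orP [->|->]; rewrite ?orbT.
  by move=> Hy'; apply: (Hmax y Hy').
rewrite !cat_cons; move: Hsz' Hmem; case: (s2 ++ s1) => [//|a t] Hsz' Hmem.
rewrite /= => /andP [Hmt /andP [Hat _]].
move=> /andP [Hma]; rewrite rcons_path => /andP [_ Hlm].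
have Ha : (a : nat) <= (m : nat) by apply: Hmem; rewrite mem_head.
have Hl : (last a t : nat) <= (m : nat) by apply: Hmem; rewrite mem_last.
have Ea : ((a : nat)).+1 = (m : nat).
  move: Hma; rewrite /tp => /orP [/eqP H|/eqP H]; lia.
have El : ((last a t : nat)).+1 = (m : nat).
  move: Hlm; rewrite /tp => /orP [/eqP H|/eqP H] //. by move: Hl; rewrite -H ltnn.
have Eal : a = last a t by apply: ord_inj; lia.
clear Hmt Hma Hlm Hl El; case: t Hsz' Hmem Hat Eal => [//|d t] _ _ Hat Eal.
by move: Hat; rewrite Eal /= mem_last.
Qed.

Lemma tp_tree : 0 < n -> is_tree tp.
Proof.
move=> Hn; split.
- split; first exact: tp_sym.
  by move=> i; rewrite /tp; apply/negP => /orP [] /eqP; lia.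
- by rewrite card_ord.
- move=> i j; apply: (connect_sub (e := [rel a b | [&& tp a b, predT a & predT b]])).
    by move=> a b /= /andP [H _]; apply: connect1.
  exact: tp_conn.
- exact: tp_acyclic.
Qed.

End PathTree.

Theorem lemma12 (V : finType) (e : rel V) :
  simple_graph e -> AT_free e -> 0 < max_degree e ->
  treewidth_le e (3 * max_degree e - 2).
Proof.
move=> [esym eirr] atf HD.
have [bs [S C E I K]] := pd_all esym eirr atf HD (U := [set: V]) (leqnn _)
  (fun u v _ _ => in_setT v).
have [v0 _] : exists v : V, true.
  case: (pickP (fun _ : V => true)) => [v0 _|H]; first by exists v0.
  move: HD; rewrite /max_degree big_pred0 // => v; exact: H.
have Hn : 0 < size bs by have [i Hi _] := C v0 (in_setT v0); lia.
exists ('I_(size bs) : finType), (@tp (size bs)), (fun i : 'I_(size bs) => nth set0 bs i); split.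
- split.
  + exact: tp_tree.
  + move=> v; have [i Hi Hv] := C v (in_setT v); by exists (Ordinal Hi).
  + move=> u v Euv; have [i Hi Hv] := E u v (in_setT u) Euv; by exists (Ordinal Hi).
  + move=> v i j Hvi Hvj; apply: tp_conn => m Hm.
    case: (leqP i j) => Hij.
      move: Hm; rewrite (minn_idPl Hij) (maxn_idPr Hij) => Hm.
      exact: (I v i m j Hm Hvi Hvj).
    move: Hm; rewrite (minn_idPr (ltnW Hij)) (maxn_idPl (ltnW Hij)) => Hm.
    exact: (I v j m i Hm Hvj Hvi).
- rewrite /td_width; set M := bigop _ _ _.
  have : M <= 3 * max_degree e - 1 by apply/bigmax_leqP => i _; apply: K.
  lia.
Qed.
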